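(* Let $\lambda>0$, let $d\ge1$ be an integer, and let $(X_t)_{t\ge1}$ be any sequence of vectors in $\mathbb R^p$ with $\|X_t\|_2\le1$. For $t\ge0$ let $V_t=\sum_{s=1}^tX_sX_s^\top+\lambda\mathrm{Id}$ (so $V_0=\lambda\mathrm{Id}$). Then for all $T\ge d+1$, $$\sum_{t=d+1}^T\min\big(1,\|X_t\|_{V_{t-d}^{-1}}^2\big)\le2dp\log\Big(1+\frac{T}{\lambda dp}\Big).$$
   Context: $\|u\|_A=\sqrt{u^\top Au}$ for a positive definite matrix $A$. *)

(* Defs.v *)
From mathcomp Require Import all_boot all_order all_algebra.
From mathcomp Require Import all_classical all_reals all_analysis.
Set Implicit Arguments. Unset Strict Implicit. Unset Printing Implicit Defensive.
Import Order.TTheory GRing.Theory Num.Theory.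
Local Open Scope ring_scope.

Definition norm2 (R : realType) (p : nat) (x : 'cV[R]_p) : R :=
  Num.sqrt (\sum_(i < p) x i 0 ^+ 2).

Definition mnorm (R : realType) (p : nat) (A : 'M[R]_p) (x : 'cV[R]_p) : R :=
  Num.sqrt ((x^T *m A *m x) 0 0).

Definition Vmat (R : realType) (p : nat) (lambda : R) (X : nat -> 'cV[R]_p)
  (t : nat) : 'M[R]_p :=
  \sum_(1 <= s < t.+1) (X s *m (X s)^T) + lambda%:M.

(* Main.v *)
Require Import Defs.
From mathcomp Require Import all_boot all_order all_algebra.
From mathcomp Require Import all_classical all_reals all_analysis.
From mathcomp Require Import ring lra zify.
Import Order.TTheory GRing.Theory Num.Theory.
Local Open Scope ring_scope.

Definition qf {R : realType} {n} (M : 'M[R]_n) (y : 'cV[R]_n) : R :=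
  (y^T *m M *m y) 0 0.
Definition PD {R : realType} {n} (M : 'M[R]_n) := forall y, y != 0 -> 0 < qf M y.
Definition PSD {R : realType} {n} (M : 'M[R]_n) := forall y, 0 <= qf M y.

Lemma mx11T {R : realType} (A : 'M[R]_1) : A^T 0 0 = A 0 0.
Proof. by rewrite mxE. Qed.

Lemma dotC {R : realType} {n : nat} (u v : 'cV[R]_n) : (u^T *m v) 0 0 = (v^T *m u) 0 0.
Proof. by rewrite -mx11T trmx_mul trmxK. Qed.

Lemma qf_inv {R : realType} {n : nat} (M : 'M[R]_n) x : M \in unitmx ->
  qf (invmx M) x = qf M (invmx M *m x).
Proof.
move=> uM; rewrite /qf.
have E : M *m (invmx M *m x) = x by rewrite mulmxA mulmxV // mul1mx.
by rewrite -(mulmxA _ M) E dotC mulmxA.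
Qed.

Lemma PD_PSD {R : realType} {n : nat} (M : 'M[R]_n) : PD M -> PSD M.
Proof.
move=> H y; case: (eqVneq y 0) => [->|/H/ltW //].
by rewrite /qf mulmx0 mxE.
Qed.

Lemma qfD {R : realType} {n : nat} (A B : 'M[R]_n) y : qf (A + B) y = qf A y + qf B y.
Proof. by rewrite /qf mulmxDr mulmxDl mxE. Qed.

Lemma qf0 {R : realType} {n : nat} y : qf (0 : 'M[R]_n) y = 0.
Proof. by rewrite /qf mulmx0 mul0mx mxE. Qed.

Lemma qf_rank1 {R : realType} {n : nat} (x y : 'cV[R]_n) :
  qf (x *m x^T) y = ((y^T *m x) 0 0) ^+ 2.
Proof.
rewrite /qf !mulmxA -(mulmxA _ x^T) mxE big_ord1.
by rewrite (dotC x y) expr2.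
Qed.

Lemma PSD_rank1 {R : realType} {n : nat} (x : 'cV[R]_n) : PSD (x *m x^T).
Proof. by move=> y; rewrite qf_rank1 sqr_ge0. Qed.

Lemma PSD_add {R : realType} {n : nat} (A B : 'M[R]_n) : PSD A -> PSD B -> PSD (A + B).
Proof. by move=> hA hB y; rewrite qfD addr_ge0. Qed.

Lemma PSD0 {R : realType} {n : nat} : PSD (0 : 'M[R]_n).
Proof. by move=> y; rewrite qf0. Qed.

Lemma PD_addPSD {R : realType} {n : nat} (A B : 'M[R]_n) : PD A -> PSD B -> PD (A + B).
Proof. by move=> hA hB y y0; rewrite qfD; apply: (lt_le_trans (hA y y0)); rewrite lerDl. Qed.

Lemma qf_scalar {R : realType} {n : nat} (a : R) y :
  qf (a%:M : 'M[R]_n) y = a * \sum_i (y i 0) ^+ 2.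
Proof.
rewrite /qf mul_mx_scalar -scalemxAl mxE mxE mulr_sumr.
by rewrite mulr_sumr; apply: eq_bigr => i _; rewrite mxE expr2.
Qed.

Lemma PD_scalar {R : realType} {n : nat} (a : R) : 0 < a -> PD (a%:M : 'M[R]_n).
Proof.
move=> a0 y y0; rewrite qf_scalar pmulr_rgt0 //.
rewrite lt_def sumr_ge0 ?andbT; last by move=> i _; rewrite sqr_ge0.
apply/eqP => /psumr_eq0P H; case/eqP: y0; apply/matrixP => i j.
rewrite ord1 mxE; apply/eqP; rewrite -sqrf_eq0; apply/eqP; apply: H => // k _.
exact: sqr_ge0.
Qed.

Lemma sym_rank1 {R : realType} {n : nat} (x : 'cV[R]_n) : (x *m x^T)^T = x *m x^T.
Proof. by rewrite trmx_mul trmxK. Qed.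


Lemma det1Dmx {R : realType} {n : nat} (u v : 'cV[R]_n) :
  \det (1%:M + u *m v^T) = 1 + (v^T *m u) 0 0.
Proof.
pose M1 := block_mx (1%:M : 'M[R]_n) (-u) v^T (1%:M : 'M[R]_1).
have e1 : M1 = block_mx 1%:M 0 v^T 1%:M *m block_mx 1%:M (-u) 0 (1%:M + v^T *m u).
  rewrite mulmx_block ?mul1mx ?mul0mx ?mulmx0 ?mulmx1 ?addr0 ?add0r.
  by rewrite mulmxN addrC addrK.
have e2 : M1 = block_mx (1%:M + u *m v^T) (-u) 0 1%:M *m block_mx 1%:M 0 v^T 1%:M.
  rewrite mulmx_block ?mul1mx ?mul0mx ?mulmx0 ?mulmx1 ?addr0 ?add0r.
  by rewrite mulNmx addrK.
have h1 := congr1 determinant e1; have h2 := congr1 determinant e2.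
rewrite det_mulmx det_lblock det_ublock !det1 !mul1r in h1.
rewrite det_mulmx det_lblock det_ublock !det1 !mulr1 in h2.
by rewrite -h2 h1 det_mx11 !mxE eqxx mulr1n.
Qed.

Lemma det_rank1 {R : realType} {n : nat} (B : 'M[R]_n) (x : 'cV[R]_n) :
  B \in unitmx -> \det (B + x *m x^T) = \det B * (1 + qf (invmx B) x).
Proof.
move=> uB.
have -> : B + x *m x^T = B *m (1%:M + (invmx B *m x) *m x^T).
  by rewrite mulmxDr mulmx1 !mulmxA mulmxV // mul1mx.
by rewrite det_mulmx det1Dmx /qf mulmxA.
Qed.


Lemma one11_neq0 {R : realType} : (1%:M : 'M[R]_1) != 0.
Proof.
apply/eqP => /matrixP/(_ 0 0); rewrite !mxE eqxx /= => /eqP.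
by rewrite oner_eq0.
Qed.

Lemma hadamard {R : realType} (n : nat) (M : 'M[R]_n) : M^T = M -> PD M ->
  0 < \det M /\ \det M <= \prod_i M i i.
Proof.
elim: n M => [|n IH] M sM pM.
  by rewrite det_mx00 big_ord0 ltr01 lexx.
pose M' : 'M[R]_(1 + n) := M.
have hM := submxK M'.
set a := ulsubmx M' in hM; set b := ursubmx M' in hM.
set c := dlsubmx M' in hM; set D := drsubmx M' in hM.
have sM' : M'^T = M' by [].
have pM' : PD M' := pM.
rewrite -hM tr_block_mx in sM'.
move/eq_block_mx: sM' => [sa scb sbc sD].
have pD : PD D.
  move=> z z0; have := pM' (col_mx (0 : 'cV[R]_1) z).
  rewrite col_mx_eq0 negb_and (negPf z0) orbT => /(_ isT).
  rewrite /qf -hM tr_col_mx -mulmxA mul_block_col mul_row_col.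
  by rewrite trmx0 !mulmx0 !mul0mx !add0r mulmxA.
have [dD_gt0 dD_le] := IH D sD pD.
have uD : D \in unitmx by rewrite unitmxE unitfE gt_eqF.
have fac : M' = block_mx (a - b *m invmx D *m c) (b *m invmx D) 0 1%:M
                *m block_mx 1%:M 0 c D.
  rewrite mulmx_block ?mul1mx ?mul0mx ?mulmx0 ?mulmx1 ?addr0 ?add0r.
  by rewrite subrK -mulmxA mulVmx // mulmx1 hM.
set s := (a - b *m invmx D *m c) 0 0.
have hs : \det M' = s * \det D.
  by rewrite fac det_mulmx det_ublock det_lblock !det1 mulr1 mul1r det_mx11.
have s_gt0 : 0 < s.
  pose y : 'cV[R]_(1 + n) := col_mx 1%:M (- (invmx D *m c)).
  have y0 : y != 0 by rewrite col_mx_eq0 negb_and one11_neq0.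
  have := pM' y y0; rewrite /qf -hM -mulmxA mul_block_col tr_col_mx.
  rewrite mul_row_col !mulmx1 !mulmxN !mulmxA mulmxV // mul1mx subrr mulmx0 addr0.
  by rewrite tr_scalar_mx mul1mx.
have nn : 0 <= (b *m invmx D *m c) 0 0.
  rewrite -sbc.
  have <- : qf (invmx D) b^T = (b *m invmx D *m b^T) 0 0 by rewrite /qf trmxK.
  by rewrite qf_inv //; apply: (PD_PSD D pD).
have s_le : s <= a 0 0.
  by move: nn; rewrite /s !mxE => nn; rewrite gerBl.
split.
  by rewrite -[M]/M' hs mulr_gt0.
rewrite -[M]/M' hs big_ord_recl.
have -> : M' 0 0 = a 0 0.
  by rewrite !mxE; f_equal; apply: val_inj.
apply: ler_pM => //; [exact: ltW | exact: ltW|].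
apply: (le_trans dD_le); rewrite le_eqVlt; apply/orP; left; apply/eqP.
by apply: eq_bigr => i _; rewrite !mxE; f_equal; apply: val_inj.
Qed.


Lemma entryB {R : realType} {m n : nat} (A B : 'M[R]_(m, n)) i j :
  (A - B) i j = A i j - B i j.
Proof. by rewrite !mxE. Qed.

Lemma entryD {R : realType} {m n : nat} (A B : 'M[R]_(m, n)) i j :
  (A + B) i j = A i j + B i j.
Proof. by rewrite !mxE. Qed.

Lemma qf_inv_le {R : realType} {n : nat} (B C : 'M[R]_n) x :
  B^T = B -> PSD B -> PSD C -> B \in unitmx -> (B + C) \in unitmx ->
  qf (invmx (B + C)) x <= qf (invmx B) x.
Proof.
move=> sB pB pC uB uA.
set A := B + C in uA *.
set z := invmx A *m x; set w := invmx B *m x.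
have Az : A *m z = x by rewrite /z mulmxA mulmxV // mul1mx.
have Bw : B *m w = x by rewrite /w mulmxA mulmxV // mul1mx.
have e1 : qf (invmx A) x = (z^T *m x) 0 0 by rewrite /qf -mulmxA dotC.
have e2 : qf (invmx B) x = (w^T *m x) 0 0 by rewrite /qf -mulmxA dotC.
have h := pC z.
have h0 := pB (z - w).
have hBzz : qf B z = (z^T *m x) 0 0 - qf C z.
  by rewrite /qf -Az /A mulmxDl mulmxDr entryD !mulmxA addrK.
have ex : qf B (z - w) = qf B z - (z^T *m x) 0 0 - (z^T *m x) 0 0 + (w^T *m x) 0 0.
  rewrite /qf mulmxBr [(z - w)^T]linearB /= !mulmxBl !entryB.
  rewrite -!mulmxA Bw.
  have -> : (w^T *m (B *m z)) 0 0 = (z^T *m x) 0 0.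
    by rewrite -mx11T trmx_mul trmx_mul trmxK sB -mulmxA Bw.
  lra.
rewrite e1 e2; lra.
Qed.


Lemma ln_le_sub1 {R : realType} (x : R) : 0 < x -> ln x <= x - 1.
Proof.
move=> x0; have := @le_ln1Dx R (x - 1).
have -> : 1 + (x - 1) = x by ring.
apply; lra.

Qed.

Lemma min_le_2ln {R : realType} (u : R) : 0 <= u -> Num.min 1 u <= 2 * ln (1 + u).
Proof.
move=> u0.
have pu : 0 < 1 + u by lra.
set v := (1 + u)^-1.
have v0 : 0 < v by rewrite invr_gt0.
have hv : v * (1 + u) = 1 by rewrite mulVf // gt_eqF.
have hl : ln v <= v - 1 by apply: ln_le_sub1.
have hl' : ln v = - ln (1 + u) by rewrite /v lnV // posrE.
have [hu|hu] := leP 1 u.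
  nra.
nra.
Qed.

Lemma min_mono {R : realType} (a b : R) : a <= b -> Num.min 1 a <= Num.min 1 b.
Proof.
move=> ab; rewrite le_min ge_min lexx /= ge_min.
by rewrite ab orbT.
Qed.


Definition Wm {R : realType} {p : nat} (lambda : R) (X : nat -> 'cV[R]_p) (d t : nat)
  : 'M[R]_p :=
  lambda%:M + \sum_(1 <= s < t.+1 | (d %| t - s)%N) X s *m (X s)^T.

Lemma sum_zero_nat {R : realType} {p : nat} (F : nat -> 'M[R]_p) (P : pred nat) a b :
  (forall s, (a <= s < b)%N -> ~~ P s) ->
  \sum_(a <= s < b) (if P s then F s else 0) = 0.
Proof.
move=> H; rewrite big_nat_cond big1 // => s /andP [hs _].
by rewrite (negPf (H s hs)).
Qed.

Lemma Wm_step {R : realType} {p : nat} (lambda : R) (X : nat -> 'cV[R]_p) d t :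
  (1 <= d)%N -> (1 <= t)%N ->
  Wm lambda X d t = Wm lambda X d (t - d) + X t *m (X t)^T.
Proof.
move=> d1 t1; rewrite /Wm -addrA; congr (_ + _).
rewrite big_mkcond big_nat_recr //= subnn dvdn0; congr (_ + _).
rewrite [RHS]big_mkcond.
case: (leqP t d) => htd.
  have -> : (t - d = 0)%N by lia.
  rewrite [RHS]big_geq // sum_zero_nat // => s /andP [s1 st].
  by rewrite gtnNdvd //; lia.
rewrite [LHS](big_cat_nat (n := (t - d).+1)); [|lia|lia].
have Z : \sum_((t - d).+1 <= s < t) (if (d %| t - s)%N then X s *m (X s)^T else 0) = 0.
  by apply: sum_zero_nat => s /andP [s1 st]; rewrite gtnNdvd //; lia.
rewrite Z /= addr0.
apply: eq_big_nat => s /andP [s1 st].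
have -> : (t - s = d + (t - d - s))%N by lia.
by rewrite dvdn_addr.
Qed.


Lemma PSD_sum {R : realType} {p : nat} (r : seq nat) (P : pred nat) (X : nat -> 'cV[R]_p) :
  PSD (\sum_(s <- r | P s) X s *m (X s)^T).
Proof.
apply: (big_ind (fun M : 'M[R]_p => PSD M)).
- exact: PSD0.
- exact: PSD_add.
- move=> s _; exact: PSD_rank1.
Qed.

Lemma sym_sum {R : realType} {p : nat} (r : seq nat) (P : pred nat) (X : nat -> 'cV[R]_p) :
  (\sum_(s <- r | P s) X s *m (X s)^T)^T = \sum_(s <- r | P s) X s *m (X s)^T.
Proof.
apply: (big_ind (fun M : 'M[R]_p => M^T = M)).
- by rewrite trmx0.
- by move=> A B hA hB; rewrite linearD /= hA hB.
- move=> s _; exact: sym_rank1.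
Qed.

Lemma gen_good {R : realType} {p : nat} (lambda : R) (r : seq nat) (P : pred nat)
  (X : nat -> 'cV[R]_p) : 0 < lambda ->
  let M := lambda%:M + \sum_(s <- r | P s) X s *m (X s)^T in
  [/\ M^T = M, PD M, 0 < \det M & M \in unitmx].
Proof.
move=> l0 M.
have sM : M^T = M by rewrite /M linearD /= tr_scalar_mx sym_sum.
have pM : PD M by apply: PD_addPSD; [exact: PD_scalar | exact: PSD_sum].
have [dM _] := hadamard _ _ sM pM.
by split => //; rewrite unitmxE unitfE gt_eqF.
Qed.

Lemma Vmat_split {R : realType} {p : nat} (lambda : R) (X : nat -> 'cV[R]_p) d t :
  Vmat lambda X t = Wm lambda X d t +
     \sum_(1 <= s < t.+1 | ~~ (d %| t - s)%N) X s *m (X s)^T.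
Proof.
rewrite /Vmat /Wm (bigID (fun s => (d %| t - s)%N)) /=.
by rewrite [LHS]addrC addrA.
Qed.

Lemma ln_prod {R : realType} {n : nat} (F : 'I_n -> R) : (forall i, 0 < F i) ->
  \sum_i ln (F i) = ln (\prod_i F i) /\ 0 < \prod_i F i.
Proof.
move=> H; apply: (big_rec2 (fun x y => x = ln y /\ 0 < y)).
  by rewrite ln1 ltr01.
move=> i x y _ [-> hy]; split; last by rewrite mulr_gt0.
by rewrite lnM // posrE.
Qed.

Lemma tele {R : realType} (f : nat -> R) d T : (0 < d)%N ->
  \sum_(1 <= t < T.+1) (f t - f (t - d)%N) =
  \sum_(i < d) f (T - i)%N - \sum_(i < d) f (0 - i)%N.
Proof.
case: d => [//|d'] _.
elim: T => [|T IH]; first by rewrite big_geq // subrr.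
rewrite big_nat_recr //= IH.
rewrite [\sum_(i < d'.+1) f (T.+1 - i)%N]big_ord_recl big_ord_recr /=.
have E : \sum_(i < d') f (T.+1 - bump 0 i)%N = \sum_(i < d') f (T - i)%N.
  by apply: eq_bigr => i _; rewrite /bump /= add1n subSS.
rewrite /bump /= in E *.
rewrite E subn0 subSS.
ring.
Qed.

Lemma tr_rank1 {R : realType} {p : nat} (x : 'cV[R]_p) :
  \tr (x *m x^T) = \sum_i x i 0 ^+ 2.
Proof.
by apply: eq_bigr => i _; rewrite mxE big_ord1 mxE expr2.
Qed.

Lemma qf_delta {R : realType} {n : nat} (M : 'M[R]_n) j : qf M (delta_mx j 0) = M j j.
Proof. by rewrite /qf trmx_delta -rowE -colE !mxE. Qed.

Lemma delta_neq0 {R : realType} {n : nat} (j : 'I_n) : (delta_mx j 0 : 'cV[R]_n) != 0.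
Proof.
apply/eqP => /matrixP/(_ j 0); rewrite !mxE !eqxx /= => /eqP.
by rewrite oner_eq0.
Qed.


Theorem lemma3 (R : realType) (p d : nat) (lambda : R) (X : nat -> 'cV[R]_p) :
  0 < lambda -> (1 <= d)%N ->
  (forall t, (1 <= t)%N -> norm2 (X t) <= 1) ->
  forall T : nat, (d.+1 <= T)%N ->
  \sum_(d.+1 <= t < T.+1)
      Num.min 1 (mnorm (invmx (Vmat lambda X (t - d))) (X t) ^+ 2)
  <= 2 * d%:R * p%:R * ln (1 + T%:R / (lambda * d%:R * p%:R)).
Proof.
move=> l0 d1 hX T dT.
case: p X hX => [|p] X hX.
  rewrite big1 ?mulr0 ?mul0r // => t _.
  rewrite /mnorm mxE big_ord0 sqrtr0 expr0n /=.
  by apply: min_r; rewrite ler01.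
set W := Wm lambda X d.
set V := Vmat lambda X.
have Wgood t : [/\ (W t)^T = W t, PD (W t), 0 < \det (W t) & W t \in unitmx].
  exact: gen_good.
have Vgood t : [/\ (V t)^T = V t, PD (V t), 0 < \det (V t) & V t \in unitmx].
  have -> : V t = lambda%:M + \sum_(1 <= s < t.+1) X s *m (X s)^T.
    by rewrite /V /Vmat addrC.
  exact: gen_good.
set q := fun t => qf (invmx (W (t - d)%N)) (X t).
set L := fun t => ln (\det (W t)).
have q0 t : 0 <= q t.
  have [_ pW _ uW] := Wgood (t - d)%N.
  by rewrite /q qf_inv //; apply: (PD_PSD _ pW).
have stepL t : (1 <= t)%N -> L t - L (t - d)%N = ln (1 + q t).
  move=> t1; have [sW pW dW uW] := Wgood (t - d)%N.
  have := q0 t; rewrite /q => qt.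
  rewrite /L /W Wm_step // det_rank1 // lnM ?posrE //; last by lra.
  by rewrite addrAC subrr add0r.
have term t : (d.+1 <= t)%N ->
    Num.min 1 (mnorm (invmx (V (t - d)%N)) (X t) ^+ 2) <= 2 * (L t - L (t - d)%N).
  move=> dt; rewrite stepL; last by lia.
  apply: (le_trans _ (min_le_2ln _ (q0 t))); apply: min_mono.
  have [sV pV _ uV] := Vgood (t - d)%N.
  have [sW pW _ uW] := Wgood (t - d)%N.
  have nn : 0 <= qf (invmx (V (t - d)%N)) (X t).
    by rewrite qf_inv //; apply: (PD_PSD _ pV).
  rewrite /mnorm -/(qf _ _) sqr_sqrtr //.
  move: uV; rewrite /V (Vmat_split _ _ d) => uV.
  rewrite /q; apply: qf_inv_le => //.
  - exact: (PD_PSD _ pW).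
  - exact: PSD_sum.
have Lnn t : (1 <= t)%N -> 0 <= L t - L (t - d)%N.
  by move=> t1; rewrite stepL // ln_ge0 // lerDl q0.
have S1 : \sum_(d.+1 <= t < T.+1)
      Num.min 1 (mnorm (invmx (V (t - d)%N)) (X t) ^+ 2)
    <= \sum_(d.+1 <= t < T.+1) 2 * (L t - L (t - d)%N).
  by apply: ler_sum_nat => t /andP [dt _]; exact: term.
have S2 : \sum_(d.+1 <= t < T.+1) 2 * (L t - L (t - d)%N)
    <= \sum_(1 <= t < T.+1) 2 * (L t - L (t - d)%N).
  rewrite [X in _ <= X](big_cat_nat (n := d.+1)) /=; [|lia|lia].
  rewrite lerDr big_nat_cond; apply: sumr_ge0 => t /andP [/andP [t1 _] _].
  by rewrite mulr_ge0 // Lnn.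
have S3 : \sum_(1 <= t < T.+1) 2 * (L t - L (t - d)%N) =
    2 * (\sum_(i < d) L (T - i)%N - \sum_(i < d) L (0 - i)%N).
  by rewrite -mulr_sumr tele.
have W0 : W 0%N = lambda%:M by rewrite /W /Wm big_geq // addr0.
have Phi0 : \sum_(i < d) L (0 - i)%N = d%:R * (p.+1%:R * ln lambda).
  under eq_bigr do rewrite sub0n.
  by rewrite sumr_const card_ord /L W0 det_scalar lnXn // !mulr_natl.
set N : R := d%:R * p.+1%:R.
have N0 : 0 < N by rewrite mulr_gt0 // ltr0n; lia.
set m : R := (N * lambda + T%:R) / N.
have m0 : 0 < m.
  have : 0 < N * lambda by rewrite mulr_gt0.
  have : (0 : R) <= T%:R by rewrite ler0n.
  by move=> h1 h2; rewrite divr_gt0 //; lra.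
have trstep t : (1 <= t)%N -> \tr (W t) - \tr (W (t - d)%N) <= 1.
  move=> t1; rewrite /W Wm_step // mxtraceD addrAC subrr add0r tr_rank1.
  have := hX t t1; rewrite /norm2 => h.
  have s0 : 0 <= \sum_i X t i 0 ^+ 2 by apply: sumr_ge0 => i _; exact: sqr_ge0.
  have := sqr_sqrtr s0; have := sqrtr_ge0 (\sum_i X t i 0 ^+ 2).
  nra.
have Psi0 : \sum_(i < d) \tr (W (0 - i)%N) = N * lambda.
  under eq_bigr do rewrite sub0n.
  rewrite sumr_const card_ord W0 mxtrace_scalar /N.
  by rewrite -(mulr_natl (lambda *+ p.+1) d) -(mulr_natl lambda p.+1) mulrA.
have Psi : \sum_(i < d) \tr (W (T - i)%N) <= N * lambda + T%:R.
  have e := tele (fun t => \tr (W t)) d T d1.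
  have : \sum_(1 <= t < T.+1) (\tr (W t) - \tr (W (t - d)%N)) <= T%:R.
    apply: (le_trans (_ : _ <= \sum_(1 <= t < T.+1) (1 : R))).
      by apply: ler_sum_nat => t /andP [t1 _]; exact: trstep.
    by rewrite sumr_const_nat subn1.
  rewrite e Psi0; lra.
have Lb i : L i <= p.+1%:R * ln m + \tr (W i) / m - p.+1%:R.
  have [sW pW dW _] := Wgood i.
  have [hd hle] := hadamard _ _ sW pW.
  have diag j : 0 < W i j j by rewrite -qf_delta; apply: pW; exact: delta_neq0.
  have [hs hp] := ln_prod (fun j => W i j j) diag.
  apply: (le_trans (_ : _ <= \sum_j ln (W i j j))).
    by rewrite /L hs ler_ln ?posrE.
  apply: (le_trans (_ : _ <= \sum_j (ln m + W i j j / m - 1))).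
    apply: ler_sum => j _.
    have hj := ln_le_sub1 _ (divr_gt0 (diag j) m0).
    rewrite ln_div ?posrE ?diag // in hj; lra.
  rewrite !big_split /= -mulr_suml !sumr_const card_ord.
  rewrite -(mulr_natl (ln m) p.+1) -(mulr_natl (-1) p.+1) /mxtrace; lra.
have PhiT : \sum_(i < d) L (T - i)%N <= N * ln m.
  apply: (le_trans (_ : _ <= \sum_(i < d) (p.+1%:R * ln m + \tr (W (T - i)%N) / m - p.+1%:R))).
    by apply: ler_sum => i _; exact: Lb.
  rewrite !big_split /= -mulr_suml !sumr_const card_ord.
  have hP : (\sum_(i < d) \tr (W (T - i)%N)) / m <= N.
    rewrite ler_pdivrMr //.
    have -> : N * m = N * lambda + T%:R by rewrite /m mulrC divfK // gt_eqF.
    exact: Psi.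
  rewrite -(mulr_natl (p.+1%:R : R) d) -(mulr_natl (- p.+1%:R : R) d) mulrN -/N.
  rewrite -mulr_suml; lra.
have em : 1 + T%:R / (lambda * d%:R * p.+1%:R) = m / lambda.
  rewrite /m -mulrA -/N.
  by field; rewrite !gt_eqF.
apply: (le_trans S1); apply: (le_trans S2).
rewrite S3 em ln_div ?posrE // Phi0.
have -> : 2 * d%:R * p.+1%:R = 2 * N :> R by rewrite /N mulrA.
rewrite mulrA -/N -mulrA mulrBr.
lra.
Qed.
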